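(* Let $d\in\mathbb{N}$. For every $r\in\mathcal{R}$, $$\mathrm{WA}(r)=\pi(\Pi_r)\qquad\text{and hence}\qquad \mathrm{Bad}(r)=\mathbb{R}^d\setminus\pi(\Pi_r).$$
   Context: For $t\in\mathbb{R}$, $\|t\|$ is the distance from $t$ to $\mathbb{Z}$. Write $\mathbb{N}=\{1,2,\dots\}$. $\mathcal{R}=\{r\in\mathbb{R}^d: r_i\ge0,\ \sum_i r_i=1\}$. For $r\in\mathcal{R}$ and $x=(x_i)\in\mathbb{R}^d$, set $$\|x\|_r=\Big(\max_{1\le i\le d}\|x_i\|^{1/r_i}\Big)^{1/d}.$$ $\mathrm{Bad}(r)=\{x\in\mathbb{R}^d:\inf_{n\in\mathbb{N}}n\|nx\|_r^d>0\}$ and $\mathrm{WA}(r)=\mathbb{R}^d\setminus\mathrm{Bad}(r)$. $\mathcal{D}$ is the set of all non-increasing $\psi:\mathbb{N}\to\mathbb{R}_{\ge0}$ with $\sum_n\psi(n)^d=\infty$. For $\psi:\mathbb{N}\to\mathbb{R}_{\ge0}$, $W(r,\psi)$ is the set of $(x,y)\in\mathbb{R}^d\times\mathbb{R}^d$ such that $\|nx+y\|_r<\psi(n)$ for infinitely many $n\in\mathbb{N}$. Then $\Pi_r=\bigcap_{\psi\in\mathcal{D}}W(r,\psi)$. $\pi(x,y)=x$ is the projection onto the first factor. *)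

(* Defs.v *)
From HB Require Import structures.
From mathcomp Require Import all_boot all_order all_algebra.
From mathcomp Require Import all_classical all_reals all_analysis.
Set Implicit Arguments. Unset Strict Implicit. Unset Printing Implicit Defensive.
Import Order.TTheory GRing.Theory Num.Theory.
Local Open Scope classical_set_scope.
Local Open Scope ring_scope.

Section Defs.
Variables (R : realType) (d : nat).

Definition distZ (t : R) : R :=
  let f := t - (Num.floor t)%:~R in Num.min f (1 - f).

Definition weights : set ('I_d -> R) :=
  [set r | (forall i, 0 <= r i) /\ \sum_(i < d) r i = 1].

(* ||x_i||^{1/r_i}, with the convention ||x_i||^{1/0} = 0 (note ||x_i|| <= 1/2 < 1) *)
Definition wterm (r : 'I_d -> R) (x : 'I_d -> R) (i : 'I_d) : R :=
  if r i == 0 then 0 else powR (distZ (x i)) (r i)^-1.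

Definition rnorm (r : 'I_d -> R) (x : 'I_d -> R) : R :=
  powR (\big[Num.max/0]_(i < d) wterm r x i) (d%:R)^-1.

Definition scalev (n : nat) (x : 'I_d -> R) : 'I_d -> R := fun i => n%:R * x i.

Definition Bad (r : 'I_d -> R) : set ('I_d -> R) :=
  [set x | 0 < inf [set (n%:R * (rnorm r (scalev n x)) ^+ d) | n in [set n : nat | (0 < n)%N]]].

Definition WA (r : 'I_d -> R) : set ('I_d -> R) := ~` Bad r.

Definition Dclass : set (nat -> R) :=
  [set psi | (forall n, (0 < n)%N -> 0 <= psi n) /\
             (forall m n, (0 < m)%N -> (m <= n)%N -> psi n <= psi m) /\
             (\sum_(1 <= n <oo) ((psi n) ^+ d)%:E = +oo)%E].

Definition W (r : 'I_d -> R) (psi : nat -> R) : set (('I_d -> R) * ('I_d -> R)) :=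
  [set xy | infinite_set [set n : nat | (0 < n)%N /\
     rnorm r (fun i => n%:R * xy.1 i + xy.2 i) < psi n]].

Definition Pi (r : 'I_d -> R) : set (('I_d -> R) * ('I_d -> R)) :=
  [set xy | forall psi, Dclass psi -> W r psi xy].

End Defs.

(* Main.v *)
Require Import Defs.
From HB Require Import structures.
From mathcomp Require Import all_boot all_order all_algebra.
From mathcomp Require Import all_classical all_reals all_analysis.
From mathcomp Require Import ring lra zify.
Import Order.TTheory GRing.Theory Num.Theory.
Local Open Scope classical_set_scope.
Local Open Scope ring_scope.

Section DistZ.
Context {R : realType}.

Definition rnd (t : R) : int :=
  if t - (Num.floor t)%:~R < 1 - (t - (Num.floor t)%:~R) then Num.floor t else Num.floor t + 1.

Lemma distZ_rnd (t : R) : distZ t = `|t - (rnd t)%:~R|.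
Proof.
rewrite /distZ /rnd /Num.min.
have h1 := floor_le t; have h2 := floorD1_gt t.
rewrite intrD in h2.
case: ifP => _.
  by rewrite ger0_norm // subr_ge0.
rewrite intrD ler0_norm; last by rewrite subr_le0 ltW.
lra.
Qed.

Lemma distZ_le (t : R) (k : int) : distZ t <= `|t - k%:~R|.
Proof.
rewrite /distZ.
have h1 := floor_le t; have h2 := floorD1_gt t.
rewrite intrD in h2.
have [kle|klt] := lerP k (Num.floor t).
  have : k%:~R <= (Num.floor t)%:~R :> R by rewrite ler_int.
  move=> hk; rewrite ger0_norm; last lra.
  rewrite ge_min; apply/orP; left; lra.
have : (Num.floor t + 1)%:~R <= k%:~R :> R by rewrite ler_int lezD1.
rewrite intrD => hk; rewrite ler0_norm; last lra.
rewrite ge_min; apply/orP; right; lra.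
Qed.

Lemma distZ_ge0 (t : R) : 0 <= distZ t.
Proof. by rewrite distZ_rnd. Qed.

Lemma distZ_le_abs (t : R) : distZ t <= `|t|.
Proof. by have := distZ_le t 0; rewrite subr0. Qed.

Lemma distZ_add (s t : R) : distZ (s + t) <= distZ s + distZ t.
Proof.
rewrite (distZ_rnd s) (distZ_rnd t).
apply: le_trans (distZ_le _ (rnd s + rnd t)) _.
rewrite intrD.
have -> : s + t - ((rnd s)%:~R + (rnd t)%:~R) = (s - (rnd s)%:~R) + (t - (rnd t)%:~R) by ring.
exact: ler_normD.
Qed.

Lemma distZ_opp (t : R) : distZ (- t) = distZ t.
Proof.
apply/eqP; rewrite eq_le; apply/andP; split.
  rewrite (distZ_rnd t); apply: le_trans (distZ_le _ (- rnd t)) _.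
  by rewrite intrN -opprD normrN.
rewrite (distZ_rnd (- t)); apply: le_trans (distZ_le _ (- rnd (- t))) _.
by rewrite intrN -[t]opprK -opprD normrN opprK.
Qed.

Lemma distZ_addz (t : R) (k : int) : distZ (t + k%:~R) = distZ t.
Proof.
apply/eqP; rewrite eq_le; apply/andP; split.
  rewrite (distZ_rnd t); apply: le_trans (distZ_le _ (rnd t + k)) _.
  rewrite intrD.
  have -> : t + k%:~R - ((rnd t)%:~R + k%:~R) = t - (rnd t)%:~R by ring.
  by [].
rewrite (distZ_rnd (t + k%:~R)); apply: le_trans (distZ_le _ (rnd (t + k%:~R) - k)) _.
rewrite intrB.
have -> : t - ((rnd (t + k%:~R))%:~R - k%:~R) = t + k%:~R - (rnd (t + k%:~R))%:~R by ring.
by [].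
Qed.

Lemma distZ_le1 (t : R) : distZ t <= 1.
Proof.
rewrite /distZ; have h1 := floor_le t; have h2 := floorD1_gt t.
rewrite intrD in h2.
rewrite ge_min; apply/orP; left; lra.
Qed.

End DistZ.

Lemma finite_nat_bound (A : set nat) : finite_set A ->
  exists N, forall n, A n -> (n <= N)%N.
Proof.
move=> fA; exists (\max_(k <- finmap.enum_fset (fset_set A)) k)%N => n An.
apply: (@leq_bigmax_seq _ _ _ (fun k => k)) => //.
by rewrite in_fset_set // inE.
Qed.

Section Mx.
Context {R : realType} {d : nat} (r : 'I_d -> R).
Hypothesis hd : (0 < d)%N.
Hypothesis hr : forall i, 0 <= r i.

Definition Mx (z : 'I_d -> R) : R := \big[Num.max/0]_(i < d) wterm r z i.

Lemma wterm_ge0 z i : 0 <= wterm r z i.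
Proof. by rewrite /wterm; case: ifP => _ //; exact: powR_ge0. Qed.

Lemma Mx_ge0 z : 0 <= Mx z.
Proof. by apply: le_trans (wterm_ge0 z (Ordinal hd)) _; exact: le_bigmax. Qed.

Lemma wterm_le_Mx z i : wterm r z i <= Mx z.
Proof. exact: le_bigmax. Qed.

Lemma Mx_le z m : 0 <= m -> (forall i, wterm r z i <= m) -> Mx z <= m.
Proof. by move=> m0 h; apply: bigmax_le. Qed.

Lemma Mx_lt z m : 0 < m -> (forall i, wterm r z i < m) -> Mx z < m.
Proof. by move=> m0 h; apply: bigmax_lt. Qed.

Lemma powR_invn_pow (a : R) : 0 <= a -> powR a (d%:R)^-1 ^+ d = a.
Proof.
move=> a0; rewrite -powR_mulrn ?powR_ge0 // -powRrM mulVf ?powRr1 //.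
by rewrite pnatr_eq0 -lt0n.
Qed.

Lemma rnorm_pow z : rnorm r z ^+ d = Mx z.
Proof. exact/powR_invn_pow/Mx_ge0. Qed.

Lemma rnorm_ge0 z : 0 <= rnorm r z.
Proof. exact: powR_ge0. Qed.

Lemma rnorm_lt z (p : R) : 0 <= p -> (rnorm r z < p) = (Mx z < p ^+ d).
Proof.
move=> p0; rewrite -rnorm_pow ltr_pXn2r // nnegrE ?rnorm_ge0 //.
Qed.

Definition Kc : R := 1 + \sum_(i < d) powR 2 (r i)^-1.

Lemma Kc_gt0 : 0 < Kc.
Proof.
rewrite /Kc; apply: (lt_le_trans ltr01); rewrite lerDl.
by apply: sumr_ge0 => i _; exact: powR_ge0.
Qed.

Lemma Kc_ge i : powR 2 (r i)^-1 <= Kc.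
Proof.
rewrite /Kc (bigD1 i) //= addrCA lerDl addr_ge0 //.
by apply: sumr_ge0 => j _; exact: powR_ge0.
Qed.

Lemma Mx_sub a b : Mx (fun i => a i - b i) <= Kc * Num.max (Mx a) (Mx b).
Proof.
apply: Mx_le.
  by rewrite mulr_ge0 ?(ltW Kc_gt0) // le_max Mx_ge0.
move=> i; rewrite /wterm; case: ifP => ri0.
  by rewrite mulr_ge0 ?(ltW Kc_gt0) // le_max Mx_ge0.
set e := (r i)^-1.
have e0 : 0 <= e by rewrite /e invr_ge0.
have hab : distZ (a i - b i) <= 2 * Num.max (distZ (a i)) (distZ (b i)).
  apply: le_trans (distZ_add (a i) (- b i)) _; rewrite distZ_opp.
  have h1 := le_max (distZ (a i)) (distZ (a i)) (distZ (b i)).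
  have h2 := le_max (distZ (b i)) (distZ (a i)) (distZ (b i)).
  rewrite lexx orTb in h1; rewrite lexx orbT in h2.
  lra.
apply: le_trans (ge0_ler_powR e0 _ _ hab) _.
- by rewrite nnegrE distZ_ge0.
- by rewrite nnegrE mulr_ge0 // le_max distZ_ge0.
rewrite powRM // ?le_max ?distZ_ge0 //.
apply: ler_pM; [exact: powR_ge0 | exact: powR_ge0 | exact: Kc_ge |].
have ha : powR (distZ (a i)) e <= Mx a.
  by apply: le_trans (wterm_le_Mx a i); rewrite /wterm ri0.
have hb : powR (distZ (b i)) e <= Mx b.
  by apply: le_trans (wterm_le_Mx b i); rewrite /wterm ri0.
rewrite /Num.max; case: ifP => _.
  by apply: le_trans hb _; rewrite le_max lexx orbT.
by apply: le_trans ha _; rewrite le_max lexx.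
Qed.

End Mx.

Section DirB.
Context {R : realType} {d : nat} (r : 'I_d -> R).
Hypothesis hd : (0 < d)%N.
Hypothesis hr : forall i, 0 <= r i.
Variables (x y : 'I_d -> R) (c : R).
Hypothesis hc0 : 0 < c.
Hypothesis hc : forall n, (0 < n)%N -> c <= n%:R * Mx r (scalev n x).

Definition zz (n : nat) : 'I_d -> R := fun i => n%:R * x i + y i.

Let a := c / Kc r.

Lemma Kc0 : 0 < Kc r.
Proof. exact: Kc_gt0. Qed.

Lemma sepB m n : (0 < m)%N -> (m < n)%N ->
  c <= (n - m)%:R * (Kc r * Num.max (Mx r (zz n)) (Mx r (zz m))).
Proof.
move=> m0 mn.
have h := hc (n - m) (ltac:(by rewrite subn_gt0)).
have e : scalev (n - m) x = fun i => zz n i - zz m i.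
  by apply: funext => i; rewrite /scalev /zz natrB ?(ltnW mn) //; ring.
rewrite e in h; apply: le_trans h _.
by apply: ler_wpM2l => //; exact: Mx_sub hr _ _.
Qed.

Lemma sepS m n : (0 < m)%N -> (0 < n)%N -> m != n ->
  c <= ((m - n) + (n - m))%:R * (Kc r * Num.max (Mx r (zz m)) (Mx r (zz n))).
Proof.
move=> m0 n0 mn; case: (ltngtP m n) => [lt|gt|eq].
- have -> : (m - n = 0)%N by apply/eqP; rewrite subn_eq0 ltnW.
  by rewrite add0n maxC; apply: sepB.
- have -> : (n - m = 0)%N by apply/eqP; rewrite subn_eq0 ltnW.
  by rewrite addn0; apply: sepB.
- by rewrite eq eqxx in mn.
Qed.

Lemma stepB N : (1 <= N)%N -> (forall n, (N < n)%N -> 0 < Mx r (zz n)) ->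
  exists N', (2 * N <= N')%N /\
    forall n, (N < n <= N')%N -> a / N'%:R <= Mx r (zz n).
Proof.
move=> N1 pos.
have a0 : 0 < a by rewrite /a divr_gt0 // Kc0.
case: (pselect (forall n, (N < n <= 2 * N)%N -> a / (2 * N)%:R <= Mx r (zz n))) => [h|].
  by exists (2 * N)%N; split.
move=> /existsNP [e] /not_implyP [/andP[Ne e2N]] /negP; rewrite -ltNge => hv.
set v := Mx r (zz e) in hv.
have v0 : 0 < v := pos e Ne.
have N2 : (0 : R) < (2 * N)%:R by rewrite ltr0n; lia.
set N' := (Num.truncn (a / v)).+1.
have h1 : a / v < N'%:R := truncnS_gt _.
have h2 : N'%:R - 1 <= a / v.
  rewrite /N' -natr1 addrK truncn_le; exact/ltW/divr_gt0.
have h3 : (2 * N)%:R < a / v.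
  by rewrite ltr_pdivlMr // mulrC -ltr_pdivlMr.
exists N'; split.
  have : (2 * N)%:R < N'%:R :> R by apply: lt_trans h3 h1.
  by rewrite ltr_nat => /ltnW.
move=> n /andP[Nn nN']; rewrite leNgt; apply/negP => hn.
have hav : a / N'%:R < v.
  rewrite ltr_pdivrMr; last by rewrite ltr0n.
  by rewrite mulrC -ltr_pdivrMr.
have ne : n != e.
  apply/eqP => ne; rewrite ne -/v in hn.
  by have := lt_trans hn hav; rewrite ltxx.
have := @sepS n e (leq_ltn_trans (leq0n N) Nn) (leq_ltn_trans (leq0n N) Ne) ne.
have -> : Num.max (Mx r (zz n)) v = v.
  by apply/max_idPr/ltW/(lt_trans hn hav).
move=> hsep.
have hD : (((n - e) + (e - n))%:R : R) <= N'%:R - 2.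
  have : ((n - e) + (e - n) + 2 <= N')%N by lia.
  by rewrite -(ler_nat R) natrD => hh; rewrite lerBrDr.
have hK := Kc0.
have ha : a <= ((n - e) + (e - n))%:R * v.
  rewrite /a ler_pdivrMr //.
  have -> : ((n - e) + (e - n))%:R * v * Kc r = ((n - e) + (e - n))%:R * (Kc r * v) by ring.
  exact: hsep.
have h2' : (N'%:R - 1) * v <= a by rewrite -ler_pdivlMr.
set D := ((n - e) + (e - n))%:R in hD ha.
nra.
Qed.


Lemma N0_ex : exists N0, (1 <= N0)%N /\ forall n, (N0 < n)%N -> 0 < Mx r (zz n).
Proof.
case: (pselect (exists n, (0 < n)%N /\ Mx r (zz n) = 0)) => [[n0 [n00 hz]]|hno].
  exists n0; split => // n hn.
  rewrite lt_neqAle Mx_ge0 // andbT eq_sym; apply/negP => /eqP hz'.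
  have nn0 : n != n0 by rewrite neq_ltn hn orbT.
  have := @sepS n n0 (leq_ltn_trans (leq0n _) hn) n00 nn0.
  rewrite hz hz' maxxx mulr0 mulr0 => h.
  by have := lt_le_trans hc0 h; rewrite ltxx.
exists 1%N; split => // n hn.
rewrite lt_neqAle Mx_ge0 // andbT eq_sym; apply/negP => /eqP hz'.
by apply: hno; exists n; split => //; apply: ltn_trans hn.
Qed.

Lemma stepF : exists f : nat -> nat, forall N, (1 <= N)%N ->
  (forall n, (N < n)%N -> 0 < Mx r (zz n)) ->
  (2 * N <= f N)%N /\ forall n, (N < n <= f N)%N -> a / (f N)%:R <= Mx r (zz n).
Proof.
have : forall N, exists N', (1 <= N)%N ->
  (forall n, (N < n)%N -> 0 < Mx r (zz n)) ->
  (2 * N <= N')%N /\ forall n, (N < n <= N')%N -> a / N'%:R <= Mx r (zz n).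
  move=> N.
  case: (pselect ((1 <= N)%N /\ forall n, (N < n)%N -> 0 < Mx r (zz n))) => [[h1 h2]|hn].
    by have [N' HN'] := @stepB N h1 h2; exists N'.
  by exists 0%N => h1 h2; exfalso; apply: hn.
by move=> /choice [f hf]; exists f.
Qed.

End DirB.

Section DirBMain.
Context {R : realType} {d : nat} (r : 'I_d -> R).
Hypothesis hd : (0 < d)%N.
Hypothesis hr : forall i, 0 <= r i.
Variables (x y : 'I_d -> R) (c : R).
Hypothesis hc0 : 0 < c.
Hypothesis hc : forall n, (0 < n)%N -> c <= n%:R * Mx r (scalev n x).

Lemma dirB_main : exists psi, Dclass d psi /\ ~ W r psi (x, y).
Proof.
have [N0 [N01 pos0]] := @N0_ex _ _ r hd hr x y c hc0 hc.
have [f hf] := @stepF _ _ r hd hr x y c hc0 hc.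
set a := c / Kc r in hf.
have a0 : 0 < a by rewrite /a divr_gt0 // Kc_gt0.
pose Ns k := iter k f N0.
have inv : forall k, (1 <= Ns k)%N /\ (forall n, (Ns k < n)%N -> 0 < Mx r (zz x y n)).
  elim => [|k [ih1 ih2]]; first by split.
  have [h2 _] := hf _ ih1 ih2.
  have e : Ns k.+1 = f (Ns k) by [].
  split; first by rewrite e; lia.
  by move=> n hn; apply: ih2; rewrite e in hn; lia.
have Nsucc k : (2 * Ns k <= Ns k.+1)%N := (hf _ (inv k).1 (inv k).2).1.
have Nblock k n : (Ns k < n <= Ns k.+1)%N -> a / (Ns k.+1)%:R <= Mx r (zz x y n).
  exact: (hf _ (inv k).1 (inv k).2).2.
have Nge k : (k <= Ns k)%N.
  elim: k => [|k ih] //; have := Nsucc k; have := (inv k).1; lia.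
have Nmono : {homo Ns : k l / (k <= l)%N >-> (k <= l)%N}.
  apply: homo_leq => //; first exact: leq_trans.
  by move=> k; have := Nsucc k; lia.
have Nspos k : (0 : R) < (Ns k)%:R by rewrite ltr0n; exact: (inv k).1.
have exk n : exists k, (n <= Ns k)%N by exists n.
pose km n := ex_minn (exk n).
have km1 n : (n <= Ns (km n))%N by rewrite /km; case: ex_minnP.
have km2 n k : (n <= Ns k)%N -> (km n <= k)%N by rewrite /km; case: ex_minnP => m _ h /h.
have km_mono m n : (m <= n)%N -> (km m <= km n)%N.
  by move=> mn; apply: km2; apply: leq_trans mn (km1 n).
pose phi n := a / (Ns (km n))%:R.
have phi0 n : 0 <= phi n by rewrite /phi divr_ge0 // ltW.
have phi_anti m n : (m <= n)%N -> phi n <= phi m.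
  move=> mn; rewrite /phi ler_wpM2l ?(ltW a0) // lef_pV2 ?posrE //.
  by rewrite ler_nat; apply: Nmono; apply: km_mono.
have phi_le n k : (n <= Ns k)%N -> a / (Ns k)%:R <= phi n.
  move=> nk; rewrite /phi ler_wpM2l ?(ltW a0) // lef_pV2 ?posrE //.
  by rewrite ler_nat; apply: Nmono; apply: km2.
have key n : (N0 < n)%N -> phi n <= Mx r (zz x y n).
  move=> hn; have : km n != 0%N.
    apply/eqP => h0; have := km1 n; rewrite h0 /Ns /=; lia.
  case e : (km n) => [//|k] _.
  have hk : (Ns k < n)%N.
    rewrite ltnNge; apply/negP => /km2; rewrite e; lia.
  rewrite /phi e; apply: Nblock; rewrite hk -e km1.
  done.
pose psi n := powR (phi n) (d%:R)^-1.
have psid n : psi n ^+ d = phi n by rewrite /psi powR_invn_pow.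
exists psi; split; last first.
  move=> hW; apply: hW.
  apply: (@sub_finite_set _ _ `I_N0.+1); last exact: finite_II.
  move=> n /= [n0 hlt]; rewrite /mkset ltnS leqNgt; apply/negP => hn.
  move: hlt; rewrite (rnorm_lt r hd) ?powR_ge0 // psid.
  by rewrite ltNge (key _ hn).
split; first by move=> n _; exact: powR_ge0.
split.
  move=> m n m0 mn; rewrite /psi; apply: ge0_ler_powR.
  - by rewrite invr_ge0.
  - by rewrite nnegrE.
  - by rewrite nnegrE.
  exact: phi_anti.
apply: eq_infty => M.
have part K : K%:R * (a / 2) <= \sum_(1 <= n < (Ns K).+1) phi n.
  elim: K => [|K ih].
    by rewrite mul0r; apply: sumr_ge0 => i _.
  rewrite (@big_cat_nat _ _ _ (Ns K).+1) //; last by rewrite ltnS; apply: Nmono; exact: leqnSn.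
  have blk : a / 2 <= \sum_((Ns K).+1 <= n < (Ns K.+1).+1) phi n.
    apply: (@le_trans _ _ (\sum_((Ns K).+1 <= n < (Ns K.+1).+1) (a / (Ns K.+1)%:R))); last first.
      by apply: ler_sum_nat => i /andP[_ hi]; apply: phi_le; rewrite -ltnS.
    rewrite sumr_const_nat subSS -[_ *+ (_ - _)]mulr_natr natrB; last by have := Nsucc K; lia.
    have h2 : (2 * Ns K)%:R <= (Ns K.+1)%:R :> R by rewrite ler_nat.
    rewrite natrM in h2.
    have hN := Nspos K.+1.
    set N1 := (Ns K.+1)%:R in h2 hN *; set N0' := (Ns K)%:R in h2 *.
    have q : N0' / N1 <= 1 / 2.
      rewrite ler_pdivrMr //; lra.
    have -> : a / N1 * (N1 - N0') = a * (1 - N0' / N1).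
      by field; rewrite gt_eqF.
    nra.
  by rewrite -natr1 mulrDl mul1r; apply: lerD ih blk.
set K := (Num.truncn (M * 2 / a)).+1.
have hK : M * 2 / a < K%:R := truncnS_gt _.
apply: le_trans (nneseries_lim_ge (Ns K).+1 _); last first.
  by move=> n _ _; rewrite lee_fin psid.
rewrite sumEFin lee_fin.
under eq_bigr => n _ do rewrite psid.
apply: le_trans (part K).
have : M * 2 < K%:R * a by rewrite -ltr_pdivrMr.
lra.
Qed.

End DirBMain.

Lemma nested_int {R : realType} (s b : nat -> R) :
  (forall K, 0 <= b K) ->
  (forall K, `|s K.+1 - s K| + b K.+1 <= b K) ->
  exists Y, forall K, `|Y - s K| <= b K.
Proof.
move=> b0 hn.
have lo_mono : {homo (fun K => s K - b K) : k l / (k <= l)%N >-> k <= l}.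
  apply: homo_leq => //; first by move=> u v w; exact: le_trans.
  move=> K /=; have := hn K.
  have := ler_norm (s K - s K.+1); rewrite -normrN opprB => h3 h1; lra.
have up_mono : {homo (fun K => s K + b K) : k l / (k <= l)%N >-> l <= k}.
  apply: homo_leq => //; first by move=> u v w h1 h2; exact: le_trans h2 h1.
  move=> K /=; have := hn K; have := ler_norm (s K.+1 - s K); move=> h1 h2; lra.
have lu K L : s K - b K <= s L + b L.
  have [KL|LK] := leqP K L.
    by apply: le_trans (lo_mono _ _ KL) _; have := b0 L; lra.
  apply: le_trans (up_mono _ _ (ltnW LK)); have := b0 K; lra.
set S := [set s K + b K | K in [set: nat]].
have hS : has_lbound S by exists (s 0%N - b 0%N) => _ [L _ <-]; exact: lu.
have nS : S !=set0 by exists (s 0%N + b 0%N), 0%N.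
exists (inf S) => K.
have h1 : inf S <= s K + b K by apply: ge_inf => //; exists K.
have h2 : s K - b K <= inf S by apply: lb_le_inf => // _ [L _ <-]; exact: lu.
rewrite ler_norml; apply/andP; split; lra.
Qed.

Section DirA.
Context {R : realType} {d : nat} (r : 'I_d -> R).
Hypothesis hd : (0 < d)%N.
Hypothesis hr : forall i, 0 <= r i.
Variable x : 'I_d -> R.
Variable lam : R.
Hypothesis lam0 : 0 < lam.
Hypothesis hlam : forall i, r i != 0 -> powR lam (r i) <= 2^-1.
Variable Q : R -> nat.
Hypothesis hQ : forall e, 0 < e -> (0 < Q e)%N /\ (Q e)%:R * Mx r (scalev (Q e) x) < e.

Fixpoint eps (k : nat) : R :=
  match k with
  | 0%N => 1
  | k'.+1 => Num.min (lam * (eps k' / (Q (eps k'))%:R)) (2^-1 ^+ k'.+1)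
  end.

Definition qq k := Q (eps k).
Definition tau k := eps k / (qq k)%:R.

Lemma eps_gt0 k : 0 < eps k.
Proof.
elim: k => [|k ih] /=; first exact: ltr01.
rewrite lt_min; apply/andP; split; last by rewrite exprn_gt0 // invr_gt0.
by rewrite mulr_gt0 // divr_gt0 // ltr0n; case: (hQ _ ih).
Qed.

Lemma qq_gt0 k : (0 < qq k)%N.
Proof. by case: (hQ _ (eps_gt0 k)). Qed.

Lemma qqR_gt0 k : (0 : R) < (qq k)%:R.
Proof. by rewrite ltr0n qq_gt0. Qed.

Lemma tau_gt0 k : 0 < tau k.
Proof. by rewrite /tau divr_gt0 // ?eps_gt0 // qqR_gt0. Qed.

Lemma Mx_tau k : Mx r (scalev (qq k) x) < tau k.
Proof.
have [_ h] := hQ _ (eps_gt0 k).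
by rewrite /tau ltr_pdivlMr ?qqR_gt0 // mulrC.
Qed.

Lemma eps_le k : eps k <= 2^-1 ^+ k.
Proof. case: k => [|k] /=; first by rewrite expr0. by rewrite ge_min lexx orbT. Qed.

Lemma qtau k : (qq k)%:R * tau k = eps k.
Proof. by rewrite /tau mulrC divfK // gt_eqF // qqR_gt0. Qed.

Lemma tau_next k : tau k.+1 <= lam * tau k.
Proof.
have h : eps k.+1 <= lam * tau k by rewrite /= ge_min lexx.
apply: le_trans h; rewrite /tau ler_pdivrMr ?qqR_gt0 //.
rewrite ler_peMr ?(ltW (eps_gt0 _)) // ler1n; exact: qq_gt0.
Qed.

Definition tt k i := if r i == 0 then 0 else powR (tau k) (r i).
Definition dl k i := if r i == 0 then 0
  else (qq k)%:R * x i - (rnd ((qq k)%:R * x i))%:~R.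

Lemma tt_ge0 k i : 0 <= tt k i.
Proof. by rewrite /tt; case: ifP => _ //; exact: powR_ge0. Qed.

Lemma dl_le k i : `|dl k i| <= tt k i.
Proof.
rewrite /dl /tt; case: ifP => ri0; first by rewrite normr0.
rewrite -distZ_rnd.
have hw : wterm r (scalev (qq k) x) i < tau k.
  exact: le_lt_trans (wterm_le_Mx _ _ _) (Mx_tau k).
rewrite /wterm ri0 /scalev in hw.
have rpos : 0 < r i by rewrite lt_neqAle eq_sym ri0 hr.
have := ge0_ler_powR (ltW rpos) _ _ (ltW hw).
rewrite -powRrM mulVf ?ri0 // powRr1 ?distZ_ge0 //; apply.
- by rewrite nnegrE powR_ge0.
- by rewrite nnegrE (ltW (tau_gt0 _)).
Qed.

Lemma tt_next k i : tt k.+1 i <= tt k i / 2.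
Proof.
rewrite /tt; case: ifP => ri0; first by rewrite mul0r.
have rpos : 0 < r i by rewrite lt_neqAle eq_sym ri0 hr.
apply: le_trans (ge0_ler_powR (ltW rpos) _ _ (tau_next k)) _.
- by rewrite nnegrE (ltW (tau_gt0 _)).
- by rewrite nnegrE mulr_ge0 ?(ltW lam0) ?(ltW (tau_gt0 _)).
rewrite powRM ?(ltW lam0) ?(ltW (tau_gt0 _)) //.
have := hlam i (negbT ri0); have := powR_ge0 (tau k) (r i); move=> h1 h2.
rewrite mulrC; nra.
Qed.

Definition ss K i := \sum_(0 <= k < K) dl k i.

Lemma Y_ex : exists Y : 'I_d -> R, forall K i, `|Y i - ss K i| <= 2 * tt K i.
Proof.
have : forall i, exists Yi : R, forall K, `|Yi - ss K i| <= 2 * tt K i.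
  move=> i; apply: nested_int => [K|K].
    by rewrite mulr_ge0 // tt_ge0.
  rewrite /ss big_nat_recr //= addrAC subrr add0r.
  have := dl_le K i; have := tt_next K i; move=> h1 h2; lra.
by move=> /choice [Y hY]; exists Y.
Qed.


Variable Y : 'I_d -> R.
Hypothesis hY : forall K i, `|Y i - ss K i| <= 2 * tt K i.

Definition yy i := - Y i.
Definition nK K := (\sum_(0 <= k < K) qq k)%N.

Lemma nK_S K : nK K.+1 = (nK K + qq K)%N.
Proof. by rewrite /nK big_nat_recr. Qed.

Lemma nK_ge K : (K <= nK K)%N.
Proof. elim: K => [|K ih] //; rewrite nK_S; have := qq_gt0 K; lia. Qed.

Lemma nK_sum K i : r i != 0 ->
  (nK K)%:R * x i = ss K i + (\sum_(0 <= k < K) rnd ((qq k)%:R * x i))%:~R.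
Proof.
move=> ri0; elim: K => [|K ih].
  by rewrite /ss /nK !big_geq // mul0r add0r.
rewrite nK_S /ss !big_nat_recr //= natrD mulrDl ih /ss intrD /dl (negbTE ri0).
ring.
Qed.

Lemma Mx_nK K : Mx r (zz x yy (nK K)) <= Kc r * tau K.
Proof.
have K0 : 0 <= Kc r * tau K by rewrite mulr_ge0 // ltW // ?Kc_gt0 ?tau_gt0.
apply: Mx_le => // i; rewrite /wterm; case: ifP => ri0 //.
have rpos : 0 < r i by rewrite lt_neqAle eq_sym ri0 hr.
have hdz : distZ ((nK K)%:R * x i + yy i) <= 2 * tt K i.
  rewrite nK_sum ?ri0 // /yy.
  set z := (\sum_(0 <= k < K) _)%R.
  have -> : ss K i + z%:~R + - Y i = (ss K i - Y i) + z%:~R by ring.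
  rewrite distZ_addz; apply: le_trans (distZ_le_abs _) _.
  by rewrite distrC.
rewrite /tt ri0 in hdz.
apply: le_trans (ge0_ler_powR _ _ _ hdz) _.
- by rewrite invr_ge0 ltW.
- by rewrite nnegrE distZ_ge0.
- by rewrite nnegrE mulr_ge0 // powR_ge0.
rewrite powRM ?powR_ge0 // -powRrM mulfV ?ri0 // powRr1 ?(ltW (tau_gt0 _)) //.
by rewrite ler_wpM2r ?(ltW (tau_gt0 _)) // Kc_ge.
Qed.

Lemma psum_ge0 (f : nat -> R) m M : (forall n, (0 < n)%N -> 0 <= f n) -> (0 < m)%N ->
  0 <= \sum_(m <= n < M) f n.
Proof.
move=> f0 m0; rewrite big_nat_cond; apply: sumr_ge0 => i /andP[/andP[hi _] _].
by apply: f0; apply: leq_trans hi.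
Qed.

Lemma psum_mono (f : nat -> R) m M : (forall n, (0 < n)%N -> 0 <= f n) -> (m <= M)%N ->
  \sum_(1 <= n < m) f n <= \sum_(1 <= n < M) f n.
Proof.
move=> f0 mM; case: (leqP m 1) => m1.
  by rewrite big_geq // psum_ge0.
rewrite (@big_cat_nat _ _ _ m 1 M) //=; first by rewrite lerDl psum_ge0 // ltnW.
exact: ltnW.
Qed.

Lemma dirA_W psi : Dclass d psi -> W r psi (x, yy).
Proof.
move=> [psi0 [psimono psisum]] /finite_nat_bound [B hB].
pose phi n := psi n ^+ d.
have notlt n : (B < n)%N -> phi n <= Mx r (zz x yy n).
  move=> Bn; rewrite leNgt; apply/negP => h.
  have n0 : (0 < n)%N by apply: leq_ltn_trans Bn.
  have := hB n; rewrite /= (rnorm_lt r hd) ?psi0 // => /(_ (conj n0 h)).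
  by rewrite leqNgt Bn.
have phi0 n : (0 < n)%N -> 0 <= phi n by move=> n0; rewrite exprn_ge0 // psi0.
have phi_anti m n : (0 < m)%N -> (m <= n)%N -> phi n <= phi m.
  move=> m0 mn; rewrite /phi ler_pXn2r // ?nnegrE ?psi0 //; last exact: leq_trans mn.
  exact: psimono.
set K0 := B.+1.
have block k : (K0 <= k)%N ->
    \sum_((nK k).+1 <= n < (nK k.+1).+1) phi n <= Kc r * eps k.
  move=> hk.
  have nk1 : (B < nK k)%N by have := nK_ge k; rewrite /K0 in hk; lia.
  apply: (@le_trans _ _ (\sum_((nK k).+1 <= n < (nK k.+1).+1) phi (nK k))).
    apply: ler_sum_nat => n /andP[h1 _]; apply: phi_anti => //; last exact: ltnW.
    exact: leq_ltn_trans (leq0n B) nk1.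
  rewrite sumr_const_nat nK_S subSS addKn -mulr_natr mulrC -qtau.
  have h : phi (nK k) <= Kc r * tau k := le_trans (notlt _ nk1) (Mx_nK k).
  have := qqR_gt0 k; nra.
set A := \sum_(1 <= n < (nK K0).+1) phi n.
have hK := Kc_gt0 r.
have part j : \sum_(1 <= n < (nK (K0 + j)).+1) phi n <= A + 2 * Kc r * (1 - 2^-1 ^+ j).
  elim: j => [|j ih]; first by rewrite addn0 expr0 subrr mulr0 addr0.
  rewrite addnS (@big_cat_nat _ _ _ (nK (K0 + j)).+1) //; last by rewrite ltnS nK_S leq_addr.
  have hb := block (K0 + j)%N (leq_addr _ _).
  have he : eps (K0 + j) <= 2^-1 ^+ j.
    apply: le_trans (eps_le _) _; rewrite exprD; apply: ler_piMl.
      by rewrite exprn_ge0 // invr_ge0.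
    by apply: exprn_ile1; lra.
  apply: le_trans (lerD ih hb) _.
  rewrite exprS; have : 0 <= 2^-1 ^+ j :> R by rewrite exprn_ge0 // invr_ge0.
  nra.
have bound m : \sum_(1 <= n < m) phi n <= A + 2 * Kc r.
  apply: le_trans (@psum_mono phi m (nK (K0 + m)).+1 phi0 _) _.
    by have := nK_ge (K0 + m); lia.
  apply: le_trans (part m) _.
  have : 0 <= 2^-1 ^+ m :> R by rewrite exprn_ge0 // invr_ge0.
  nra.
have : (\sum_(1 <= n <oo) ((psi n) ^+ d)%:E <= (A + 2 * Kc r)%:E)%E.
  apply: lime_le.
    by apply: is_cvg_nneseries => n n1 _; rewrite lee_fin; exact: phi0.
  by apply: nearW => m; rewrite sumEFin lee_fin bound.
by rewrite psisum.
Qed.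

End DirA.

Section Main.
Context {R : realType} {d : nat} (r : 'I_d -> R).
Hypothesis hd : (0 < d)%N.
Hypothesis hr : forall i, 0 <= r i.

Lemma Bad_lb x : Bad r x ->
  exists c, 0 < c /\ forall n, (0 < n)%N -> c <= n%:R * Mx r (scalev n x).
Proof.
rewrite /Bad /= => hB; eexists; split; first exact: hB.
move=> n n0; rewrite -(rnorm_pow r hd); apply: ge_inf; last by exists n.
by exists 0 => _ [m _ <-]; rewrite mulr_ge0 // exprn_ge0 // rnorm_ge0.
Qed.

Lemma WA_small x : ~ Bad r x -> forall e, 0 < e ->
  exists q, (0 < q)%N /\ q%:R * Mx r (scalev q x) < e.
Proof.
move=> hW e e0; apply: contrapT => hn; apply: hW; rewrite /Bad /=.
apply: lt_le_trans e0 _; apply: lb_le_inf.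
  by eexists; exists 1%N.
move=> _ [n n0 <-]; rewrite (rnorm_pow r hd) leNgt; apply/negP => h.
by apply: hn; exists n; split.
Qed.

Lemma lam_ex : exists lam : R, 0 < lam /\ forall i, r i != 0 -> powR lam (r i) <= 2^-1.
Proof.
set K0 := \sum_(i < d) (r i)^-1.
exists (powR 2^-1 K0); split; first by rewrite powR_gt0 // invr_gt0.
move=> i ri0.
have rpos : 0 < r i by rewrite lt_neqAle eq_sym ri0 hr.
have hK : (r i)^-1 <= K0.
  rewrite /K0 (bigD1 i) //= lerDl; by apply: sumr_ge0 => j _; rewrite invr_ge0.
have h1 : 1 <= K0 * r i.
  by rewrite -(mulVf ri0) ler_wpM2r // ltW.
rewrite -powRrM; apply: le_trans (ger_powR _ h1) _.
  by apply/andP; split; lra.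
by rewrite powRr1 //; lra.
Qed.

Lemma WA_Pi x : ~ Bad r x -> exists y, Pi r (x, y).
Proof.
move=> hW.
have : forall e : R, exists q, 0 < e -> (0 < q)%N /\ q%:R * Mx r (scalev q x) < e.
  move=> e; case: (pselect (0 < e)) => [e0|ne].
    by have [q hq] := @WA_small x hW e e0; exists q.
  by exists 0%N.
move=> /choice [Q hQ].
have [lam [lam0 hlam]] := lam_ex.
have [Y hY] := @Y_ex _ _ r hr x lam lam0 hlam Q hQ.
exists (yy Y) => psi hpsi.
exact: (@dirA_W _ _ r hd hr x lam lam0 Q hQ Y hY psi hpsi).
Qed.

Lemma Pi_WA x y : Pi r (x, y) -> ~ Bad r x.
Proof.
move=> hP /Bad_lb [c [c0 hc]].
have [psi [hD hnW]] := @dirB_main _ _ r hd hr x y c c0 hc.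
exact: hnW (hP psi hD).
Qed.

End Main.

Theorem theorem14 (R : realType) (d : nat) (hd : (0 < d)%N) (r : 'I_d -> R) :
  weights r ->
  WA r = fst @` Pi r /\ Bad r = ~` (fst @` Pi r).
Proof.
move=> [hr _].
have e : WA r = fst @` Pi r.
  apply/seteqP; split => [x hx | _ [[x y] hP <-]].
    by have [y hy] := @WA_Pi _ _ r hd hr x hx; exists (x, y).
  exact: (@Pi_WA _ _ r hd hr x y hP).
split => //; by rewrite -e /WA setCK.
Qed.
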